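(* Let $n\ge 1$ and let $P'$, $P''$ be two probability distributions on $\mathfrak{S}_n$. For $i<j$ put $p'_{i,j}=\mathbb{P}_{\Sigma\sim P'}\{\Sigma(i)<\Sigma(j)\}$ and $p''_{i,j}=\mathbb{P}_{\Sigma\sim P''}\{\Sigma(i)<\Sigma(j)\}$. (i) Let $\sigma_{P''}$ be any Kemeny median of $P''$. Then $$L^*_{P'}\le L_{P'}(\sigma_{P''})\le L^*_{P'}+2\sum_{i<j}|p'_{i,j}-p''_{i,j}|.$$ (ii) Suppose that $P'\in\mathcal{T}$ and $P''\in\mathcal{T}$, and set $h=\min_{i<j}|p''_{i,j}-1/2|$. Then $$d_\tau(\sigma^*_{P'},\sigma^*_{P''})\le \frac{1}{h}\sum_{i<j}|p'_{i,j}-p''_{i,j}|.$$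
   Context: $\mathfrak{S}_n$ is the set of permutations of $[n]=\{1,\dots,n\}$. A ranking is a permutation $\sigma$, where $\sigma(i)$ is the rank of item $i$. The Kendall $\tau$ distance is $d_\tau(\sigma,\sigma')=\sum_{i<j}\mathbb{I}\{(\sigma(i)-\sigma(j))(\sigma'(i)-\sigma'(j))<0\}$. For a probability distribution $P$ on $\mathfrak{S}_n$ and $\Sigma\sim P$, set $L_P(\sigma)=\mathbb{E}_{\Sigma\sim P}[d_\tau(\Sigma,\sigma)]$ and $L_P^*=\min_{\sigma\in\mathfrak{S}_n}L_P(\sigma)$. A Kemeny median of $P$ is any minimizer of $L_P$. The pairwise probabilities of $P$ are $p_{i,j}=\mathbb{P}\{\Sigma(i)<\Sigma(j)\}$. $P$ is strictly stochastically transitive if (a) for all $i,j,k\in[n]$, $p_{i,j}\ge1/2$ and $p_{j,k}\ge 1/2$ imply $p_{i,k}\ge 1/2$, and (b) $p_{i,j}\ne 1/2$ for all $i<j$. $\mathcal{T}$ denotes the set of strictly stochastically transitive distributions on $\mathfrak{S}_n$. For $P\in\mathcal{T}$ the Kemeny median is unique; it is denoted $\sigma^*_P$ and equals $\sigma^*_P(i)=1+\sum_{k\ne i}\mathbb{I}\{p_{i,k}<1/2\}$. *)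

(* Defs.v *)
(* Rankings of [n] are permutations of 'I_n (0-based ranks). *)
From HB Require Import structures.
From mathcomp Require Import all_boot all_order all_algebra all_fingroup.
Set Implicit Arguments. Unset Strict Implicit. Unset Printing Implicit Defensive.
Import Order.TTheory GRing.Theory Num.Theory.
Local Open Scope ring_scope.

Definition kendall (n : nat) (s t : 'S_n) : nat :=
  (\sum_(i : 'I_n) \sum_(j : 'I_n | (i < j)%N)
     ((((s i)%:Z - (s j)%:Z) * ((t i)%:Z - (t j)%:Z)) < 0)%R : nat)%N.

Definition is_distr (R : realFieldType) (n : nat) (P : {ffun 'S_n -> R}) : Prop :=
  (forall s, 0 <= P s) /\ \sum_(s : 'S_n) P s = 1.

Definition risk (R : realFieldType) (n : nat) (P : {ffun 'S_n -> R}) (sg : 'S_n) : R :=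
  \sum_(s : 'S_n) P s * (kendall s sg)%:R.

(* L*_P = min over sigma of L_P(sigma) (the index risk P 1 is itself attained) *)
Definition opt_risk (R : realFieldType) (n : nat) (P : {ffun 'S_n -> R}) : R :=
  \big[Num.min/risk P 1]_(sg : 'S_n) risk P sg.

Definition kemeny_median (R : realFieldType) (n : nat) (P : {ffun 'S_n -> R}) (sg : 'S_n) : Prop :=
  forall tau : 'S_n, risk P sg <= risk P tau.

Definition pairprob (R : realFieldType) (n : nat) (P : {ffun 'S_n -> R}) (i j : 'I_n) : R :=
  \sum_(s : 'S_n | (s i < s j)%N) P s.

Definition strictly_sst (R : realFieldType) (n : nat) (P : {ffun 'S_n -> R}) : Prop :=
  (forall i j k : 'I_n, 1/2 <= pairprob P i j -> 1/2 <= pairprob P j k ->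
      1/2 <= pairprob P i k) /\
  (forall i j : 'I_n, (i < j)%N -> pairprob P i j != 1/2).

Definition pair_l1 (R : realFieldType) (n : nat) (P1 P2 : {ffun 'S_n -> R}) : R :=
  \sum_(i : 'I_n) \sum_(j : 'I_n | (i < j)%N) `|pairprob P1 i j - pairprob P2 i j|.

(* h = min_{i<j} |p_{i,j} - 1/2|; the neutral element 1 is never attained
   when n >= 2 (all values are <= 1/2), and for n = 1 the bound is trivial. *)
Definition margin (R : realFieldType) (n : nat) (P : {ffun 'S_n -> R}) : R :=
  \big[Num.min/1]_(i : 'I_n) \big[Num.min/1]_(j : 'I_n | (i < j)%N) `|pairprob P i j - 1/2|.

(* Main.v *)
Require Import Defs.
From HB Require Import structures.
From mathcomp Require Import all_boot all_order all_algebra all_fingroup.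
From mathcomp Require Import zify ring lra.
Import Order.TTheory GRing.Theory Num.Theory.
Local Open Scope ring_scope.
Set Implicit Arguments. Unset Strict Implicit. Unset Printing Implicit Defensive.

Lemma sign_prod (a b c d : nat) : a != b -> c != d ->
  (((a%:Z - b%:Z) * (c%:Z - d%:Z)) < 0) = ((a < b)%N != (c < d)%N).
Proof.
move=> hab hcd.
case: (ltngtP a b) => h1; case: (ltngtP c d) => h2 //=; try (by move: hab; rewrite h1 eqxx);
  try (by move: hcd; rewrite h2 eqxx).
- apply/negbTE; rewrite -leNgt; nia.
- apply/idP; nia.
- apply/idP; nia.
- apply/negbTE; rewrite -leNgt; nia.
Qed.

Lemma perm_neq n (s : 'S_n) (i j : 'I_n) : i != j -> (s i : nat) != s j.
Proof. by move=> h; apply: contra h => /eqP/val_inj/perm_inj ->. Qed.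

Lemma notlt n (s : 'S_n) (i j : 'I_n) : i != j -> (~~ (s i < s j)%N) = (s j < s i)%N.
Proof.
move=> h; rewrite -leqNgt ltn_neqAle.
have h' : j != i by rewrite eq_sym.
by rewrite (perm_neq s h').
Qed.

Lemma kendall_alt n (s t : 'S_n) : kendall s t =
  (\sum_(i : 'I_n) \sum_(j : 'I_n | (i < j)%N) (((s i < s j)%N != (t i < t j)%N) : nat))%N.
Proof.
apply: eq_bigr => i _; apply: eq_bigr => j hij.
have hne : i != j by rewrite neq_ltn hij.
by rewrite sign_prod // perm_neq.
Qed.

Lemma pair_sum (R : realFieldType) n (P : {ffun 'S_n -> R}) (hP : is_distr P) (i j : 'I_n) :
  i != j -> pairprob P i j + pairprob P j i = 1.
Proof.
move=> hne; case: hP => _ <-.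
rewrite (bigID (fun s : 'S_n => (s i < s j)%N)) /=; congr (_ + _).
apply: eq_bigl => s /=; symmetry; exact: notlt.
Qed.

Definition cst (R : realFieldType) n (P : {ffun 'S_n -> R}) (t : 'S_n) (i j : 'I_n) : R :=
  if (t i < t j)%N then 1 - pairprob P i j else pairprob P i j.

Lemma risk_alt (R : realFieldType) n (P : {ffun 'S_n -> R}) (hP : is_distr P) (t : 'S_n) :
  risk P t = \sum_(i : 'I_n) \sum_(j : 'I_n | (i < j)%N) cst P t i j.
Proof.
rewrite /risk.
under eq_bigr => s _ do rewrite kendall_alt natr_sum mulr_sumr.
rewrite exchange_big /=; apply: eq_bigr => i _.
under eq_bigr => s _ do rewrite natr_sum mulr_sumr.
rewrite exchange_big /=; apply: eq_bigr => j hij.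
have hne : i != j by rewrite neq_ltn hij.
rewrite /cst /pairprob.
have -> : \sum_(s : 'S_n) P s * ((((s i < s j)%N != (t i < t j)%N) : nat)%:R : R) =
   \sum_(s : 'S_n | ((s i < s j)%N != (t i < t j)%N)) P s.
  by rewrite [RHS]big_mkcond /=; apply: eq_bigr => s _; case: ifP => _; rewrite ?mulr1 ?mulr0.
case: ifP => _.
- rewrite -(pair_sum hP hne) /pairprob addrC addKr.
  by apply: eq_bigl => s /=; rewrite -(notlt s hne) eqb_id.
- by apply: eq_bigl => s; rewrite eqbF_neg negbK.
Qed.

Lemma risk_diff (R : realFieldType) n (P1 P2 : {ffun 'S_n -> R})
  (hP1 : is_distr P1) (hP2 : is_distr P2) (t : 'S_n) :
  `|risk P1 t - risk P2 t| <= pair_l1 P1 P2.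
Proof.
rewrite !risk_alt // -sumrB /pair_l1.
apply: le_trans (ler_norm_sum _ _ _) _; apply: ler_sum => i _.
rewrite -sumrB; apply: le_trans (ler_norm_sum _ _ _) _; apply: ler_sum => j _.
rewrite /cst; case: ifP => _ //.
set a := pairprob P1 i j; set b := pairprob P2 i j.
have -> : 1 - a - (1 - b) = b - a by ring.
by rewrite distrC.
Qed.

Lemma opt_le (R : realFieldType) n (P : {ffun 'S_n -> R}) t : opt_risk P <= risk P t.
Proof. by rewrite /opt_risk (bigD1 t) //= ge_min lexx. Qed.

Lemma le_opt (R : realFieldType) n (P : {ffun 'S_n -> R}) x :
  (forall t, x <= risk P t) -> x <= opt_risk P.
Proof.
move=> h; rewrite /opt_risk; apply: (big_ind (fun y => x <= y)) => //.
by move=> a b ha hb; rewrite le_min ha hb.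
Qed.

Lemma part1 (R : realFieldType) n (P1 P2 : {ffun 'S_n -> R})
  (hP1 : is_distr P1) (hP2 : is_distr P2) (sg2 : 'S_n) :
  kemeny_median P2 sg2 ->
     opt_risk P1 <= risk P1 sg2 /\
     risk P1 sg2 <= opt_risk P1 + 2 * pair_l1 P1 P2.
Proof.
move=> hm; split; first exact: opt_le.
rewrite -lerBlDr; apply: le_opt => t.
have h1 := risk_diff hP1 hP2 sg2; have h2 := risk_diff hP1 hP2 t.
have h3 := hm t.
rewrite ler_distl in h1; rewrite ler_distl in h2.
case/andP: h1 => _ h1; case/andP: h2 => h2 _.
lra.
Qed.

Section Med.
Variables (R : realFieldType) (n : nat) (P : {ffun 'S_n -> R}).
Hypothesis hP : is_distr P.
Hypothesis hS : strictly_sst P.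

Lemma pp_diag i : pairprob P i i = 0.
Proof. by rewrite /pairprob big_pred0 // => s; rewrite ltnn. Qed.

Lemma neq_half i j : i != j -> pairprob P i j != 1/2.
Proof.
case: hS => _ hb.
rewrite neq_ltn => /orP [h|h]; first exact: hb.
have hji : j != i by rewrite neq_ltn h.
have e := pair_sum hP hji.
have := hb _ _ h; apply: contra => /eqP e2.
apply/eqP; rewrite e2 in e; lra.
Qed.

Lemma flip i j : i != j -> (1/2 < pairprob P j i) = ~~ (1/2 < pairprob P i j).
Proof.
move=> h; have e := pair_sum hP h; have nh := neq_half h.
rewrite -leNgt le_eqVlt (negbTE nh) /=.
apply/idP/idP => H; lra.
Qed.

Definition Aset i := [set k | 1/2 < pairprob P k i].

Lemma Aset_lt i : (#|Aset i| < n)%N.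
Proof.
apply: (@leq_trans #|[set: 'I_n]|); last by rewrite cardsT card_ord.
apply: proper_card; apply/properP; split; first exact: subsetT.
by exists i => //; rewrite inE pp_diag -leNgt; lra.
Qed.

Lemma key i j : 1/2 < pairprob P i j -> (#|Aset i| < #|Aset j|)%N.
Proof.
move=> hij; have hne : i != j by apply: contraTneq hij => ->; rewrite pp_diag; lra.
apply: proper_card; apply/properP; split.
- apply/subsetP => k; rewrite !inE => hk.
  have hkj : k != j.
    by apply: contraTneq hk => ->; rewrite (flip hne) hij.
  case: hS => ha _.
  have := ha k i j (ltW hk) (ltW hij).
  by rewrite le_eqVlt eq_sym (negbTE (neq_half hkj)).
- by exists i; rewrite !inE // pp_diag -leNgt; lra.
Qed.

Definition fstar (i : 'I_n) : 'I_n := Ordinal (Aset_lt i).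

Lemma fstar_inj : injective fstar.
Proof.
move=> i j /(congr1 val) /= e; apply/eqP; apply/negP => /negP hne.
case: (boolP (1/2 < pairprob P i j)) => h.
- by move: (key h); rewrite e ltnn.
- by rewrite -(flip hne) in h; move: (key h); rewrite e ltnn.
Qed.

Definition sstar : 'S_n := perm fstar_inj.

Lemma sstar_agree i j : i != j -> (sstar i < sstar j)%N = (1/2 < pairprob P i j).
Proof.
move=> hne; rewrite !permE /=.
case: (boolP (1/2 < pairprob P i j)) => h; first exact: key.
rewrite -(flip hne) in h; have := key h => hk; apply/negbTE; rewrite -leqNgt; exact: ltnW.
Qed.

Lemma median_agree sg : kemeny_median P sg ->
  forall i j : 'I_n, (i < j)%N -> (sg i < sg j)%N = (1/2 < pairprob P i j).
Proof.
move=> hm.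
have hle : forall i j : 'I_n, (i < j)%N -> cst P sstar i j <= cst P sg i j.
  move=> i j hij; have hne : i != j by rewrite neq_ltn hij.
  rewrite /cst sstar_agree //.
  have := neq_half hne; set p := pairprob P i j => hp.
  rewrite neq_lt in hp.
  by case: (sg i < sg j)%N; case: (ltP (1/2) p) => h; case/orP: hp => hp; lra.
have hs := hm sstar; rewrite !risk_alt // !pair_big_dep /= in hs.
have h0 : \sum_(p : 'I_n * 'I_n | (p.1 < p.2)%N) (cst P sg p.1 p.2 - cst P sstar p.1 p.2) = 0.
  apply/eqP; rewrite eq_le; apply/andP; split.
    by rewrite sumrB subr_le0 hs.
  by rewrite sumr_ge0 // => p hp; rewrite subr_ge0 hle.
move=> i j hij.
have hij' : ((i, j).1 < (i, j).2)%N by [].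
have hge : forall p : 'I_n * 'I_n, (p.1 < p.2)%N -> 0 <= cst P sg p.1 p.2 - cst P sstar p.1 p.2.
  by move=> p hp; rewrite subr_ge0 hle.
have /= /eqP := psumr_eq0P hge h0 hij'.
have hne : i != j by rewrite neq_ltn hij.
rewrite subr_eq0 /cst sstar_agree //.
have := neq_half hne; set p := pairprob P i j => hp.
case: (sg i < sg j)%N; case: (1/2 < p) => //= /eqP e; exfalso; move/eqP: hp; apply; lra.
Qed.
End Med.

Lemma margin_le (R : realFieldType) n (P : {ffun 'S_n -> R}) (i j : 'I_n) :
  (i < j)%N -> margin P <= `|pairprob P i j - 1/2|.
Proof.
move=> hij; rewrite /margin (bigD1 i) //= ge_min; apply/orP; left.
by rewrite (bigD1 j) //= ge_min lexx.
Qed.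

Lemma margin_gt0 (R : realFieldType) n (P : {ffun 'S_n -> R}) :
  strictly_sst P -> 0 < margin P.
Proof.
case=> _ hb; rewrite /margin; apply: (big_ind (fun y => 0 < y)) => //.
  by move=> a b ha hb'; rewrite lt_min ha hb'.
move=> i _; apply: (big_ind (fun y => 0 < y)) => //.
  by move=> a b ha hb'; rewrite lt_min ha hb'.
by move=> j hij; rewrite normr_gt0 subr_eq0 hb.
Qed.

Unset Implicit Arguments.
Set Strict Implicit.

Theorem lemma4 (R : realFieldType) (n : nat) (hn : (0 < n)%N)
    (P1 P2 : {ffun 'S_n -> R}) (hP1 : is_distr P1) (hP2 : is_distr P2) :
  (forall sg2 : 'S_n, kemeny_median P2 sg2 ->
     opt_risk P1 <= risk P1 sg2 /\
     risk P1 sg2 <= opt_risk P1 + 2 * pair_l1 P1 P2) /\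
  (strictly_sst P1 -> strictly_sst P2 ->
   forall sg1 sg2 : 'S_n, kemeny_median P1 sg1 -> kemeny_median P2 sg2 ->
     (kendall sg1 sg2)%:R <= pair_l1 P1 P2 / margin P2).
Proof.
split; first by move=> sg2; exact: part1.
move=> hS1 hS2 sg1 sg2 hm1 hm2.
have hh := margin_gt0 hS2.
rewrite ler_pdivlMr // mulrC kendall_alt natr_sum mulr_sumr /pair_l1.
apply: ler_sum => i _; rewrite natr_sum mulr_sumr; apply: ler_sum => j hij.
rewrite (median_agree hP1 hS1 hm1 hij) (median_agree hP2 hS2 hm2 hij).
have hmg := margin_le P2 hij.
set p1 := pairprob P1 i j; set p2 := pairprob P2 i j; set h := margin P2.
fold p2 in hmg.
case: (ltP (1/2) p1) => a; case: (ltP (1/2) p2) => b /=; rewrite ?mulr0 ?mulr1 ?normr_ge0 //.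
- apply: (le_trans hmg); rewrite (ger0_norm (_ : 0 <= p1 - p2)); last lra.
  rewrite (ler0_norm (_ : p2 - 1/2 <= 0)); last lra. lra.
- apply: (le_trans hmg); rewrite (ler0_norm (_ : p1 - p2 <= 0)); last lra.
  rewrite (ger0_norm (_ : 0 <= p2 - 1/2)); last lra. lra.
Qed.
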